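(* For every $m\in\mathbb N$, \[ \frac{e^m}{m^{1/4}e^2}\le\Big(\sum_{j=0}^m\Big(\frac{m^j}{j!}\Big)^2\Big)^{1/2}\le\frac{e^m}{m^{1/4}}. \] *)

(* Defs.v *)
From Stdlib Require Export Reals Factorial.
Open Scope R_scope.

(* S m = sum_{j=0}^m (m^j / j!)^2 ; note sum_f_R0 f m has the m+1 terms j = 0..m *)
Definition Ssq (m : nat) : R :=
  sum_f_R0 (fun j => (INR m ^ j / INR (fact j)) ^ 2) m.

(* Main.v *)
Require Import Defs.
From Stdlib Require Import Reals Lra Lia Psatz Factorial.
From Coquelicot Require Coquelicot ElemFct.
Open Scope R_scope.

Module LnB.
Import Coquelicot.Coquelicot.

Lemma ln_up (x : R) : 0 < x -> ln (1 + x) <= x - x^2/2 + x^3/3.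
Proof.
  intros hx.
  set (f := fun t => t - t^2/2 + t^3/3 - ln (1 + t)).
  destruct (MVT_cor2 f (fun t => t^3/(1+t)) 0 x hx) as [c [Hc Hc2]].
  { intros c Hc. apply is_derive_Reals. unfold f.
    auto_derive. lra. field. lra. }
  assert (f 0 = 0). { unfold f; replace (1+0) with 1 by ring; rewrite ln_1; field. }
  assert (0 <= c^3/(1+c)). { apply Rdiv_le_0_compat. apply pow_le; lra. lra. }
  assert (0 <= f x - f 0) by (rewrite Hc; nra).
  unfold f in *. lra.
Qed.

Lemma ln_lo (x : R) : 0 < x -> 2*x/(2+x) <= ln (1 + x).
Proof.
  intros hx.
  set (f := fun t => ln (1 + t) - 2*t/(2+t)).
  destruct (MVT_cor2 f (fun t => t^2/((1+t)*(2+t)^2)) 0 x hx) as [c [Hc Hc2]].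
  { intros c Hc. apply is_derive_Reals. unfold f.
    auto_derive. lra. field. lra. }
  assert (f 0 = 0). { unfold f; replace (1+0) with 1 by ring; rewrite ln_1; field. }
  assert (0 <= c^2/((1+c)*(2+c)^2)). { apply Rdiv_le_0_compat. apply pow_le; lra.
     apply Rmult_lt_0_compat. lra. apply pow_lt; lra. }
  assert (0 <= f x - f 0) by (rewrite Hc; nra).
  unfold f in *. lra.
Qed.
End LnB.
Import LnB.
Lemma Rdiv_le_0_compat (x y : R) : 0 <= x -> 0 < y -> 0 <= x / y.
Proof. intros. unfold Rdiv. apply Rmult_le_pos; auto. left; apply Rinv_0_lt_compat; auto. Qed.

Lemma stir (m : nat) : (1 <= m)%nat ->
 INR m * ln (INR m) - INR m + ln (INR m)/2 + / INR m <= ln (INR (fact m)) /\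
 ln (INR (fact m)) <= INR m * ln (INR m) - INR m + ln (INR m)/2 + 1.
Proof.
  induction m as [|m IH]; intros hm; [lia|].
  destruct m as [|m].
  { simpl. replace (0+1) with 1 by ring. rewrite ln_1. lra. }
  destruct (IH ltac:(lia)) as [IH1 IH2].
  set (n := INR (S m)) in *.
  assert (hn : 1 <= n). { unfold n. rewrite S_INR. pose proof (pos_INR m). lra. }
  assert (e1 : INR (S (S m)) = n + 1) by (unfold n; rewrite (S_INR (S m)); ring).
  assert (ef : INR (fact (S (S m))) = (n+1) * INR (fact (S m))).
  { change (fact (S (S m))) with (S (S m) * fact (S m))%nat. rewrite mult_INR, e1. ring. }
  assert (hF : 0 < INR (fact (S m))) by (apply lt_0_INR, lt_O_fact).
  set (x := / n).
  assert (hx : 0 < x) by (unfold x; apply Rinv_0_lt_compat; lra).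
  assert (eL : ln (n+1) = ln n + ln (1 + x)).
  { rewrite <- ln_mult by lra. f_equal. unfold x. field. lra. }
  rewrite ef, e1, ln_mult by lra. rewrite eL.
  set (L := ln (1 + x)) in *.
  set (lF := ln (INR (fact (S m)))) in *.
  set (ln_ := ln n) in *.
  pose proof (ln_up x hx) as U. pose proof (ln_lo x hx) as Lo.
  fold L in U, Lo.
  assert (A1 : (n + 1/2) * L <= 1 + / n - / (n+1)).
  { apply Rle_trans with ((n+1/2) * (x - x^2/2 + x^3/3)).
    apply Rmult_le_compat_l; lra.
    assert (E : (n+1/2) * (x - x^2/2 + x^3/3) = 1 + (1/n - 1/(n+1)) - (11*n^2 - 3*n - 2)/(12*n^3*(n+1))).
    { unfold x; field; lra. }
    rewrite E.
    assert (0 <= (11*n^2 - 3*n - 2)/(12*n^3*(n+1))).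
    { apply Rdiv_le_0_compat. nra. assert (0 < n^3) by (apply pow_lt; lra). nra. }
    unfold Rdiv. lra. }
  assert (A2 : 1 <= (n + 1/2) * L).
  { apply Rle_trans with ((n+1/2) * (2*x/(2+x))).
    right. unfold x. field. lra.
    apply Rmult_le_compat_l; lra. }
  split; nra.
Qed.
Lemma exp_div a b : exp a / exp b = exp (a - b).
Proof. unfold Rminus. rewrite exp_plus, exp_Ropp. pose proof (exp_pos b). field. lra. Qed.

Lemma exp_le a b : a <= b -> exp a <= exp b.
Proof. intros [h|h]. left; apply exp_increasing; auto. subst; lra. Qed.

Lemma am_bounds (m : nat) : (1 <= m)%nat ->
  exp (INR m - 1) / sqrt (INR m) <= INR m ^ m / INR (fact m) /\
  INR m ^ m / INR (fact m) <= exp (INR m) / sqrt (INR m).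
Proof.
  intros hm.
  destruct (stir m hm) as [H1 H2].
  assert (hpos : 0 < INR m) by (apply lt_0_INR; lia).
  assert (hF : 0 < INR (fact m)) by (apply lt_0_INR, lt_O_fact).
  rewrite <- (exp_ln (INR m ^ m)) by (apply pow_lt; lra).
  rewrite <- (exp_ln (INR (fact m))) by lra.
  rewrite <- Rpower_sqrt by lra. unfold Rpower.
  rewrite !exp_div, ln_pow by lra.
  assert (0 < / INR m) by (apply Rinv_0_lt_compat; lra).
  split; apply exp_le; lra.
Qed.

Lemma sum_rev (n : nat) : forall f, sum_f_R0 (fun i => f (n - i)%nat) n = sum_f_R0 f n.
Proof.
  induction n as [|n IH]; intros f; [reflexivity|].
  rewrite (decomp_sum f (S n)) by lia. simpl pred.
  rewrite <- (IH (fun k => f (S k))).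
  simpl sum_f_R0 at 1. rewrite Nat.sub_diag.
  rewrite (sum_eq (fun i => f (S n - i)%nat) (fun i => f (S (n - i))%nat)).
  ring. intros i hi. f_equal. lia.
Qed.

Lemma sum_mono_n (f : nat -> R) (K m : nat) : (K <= m)%nat -> (forall i, 0 <= f i) ->
  sum_f_R0 f K <= sum_f_R0 f m.
Proof.
  intros hK hf. induction m as [|m IH].
  - assert (K = 0%nat) by lia. subst. lra.
  - destruct (Nat.eq_dec K (S m)) as [e|ne]. subst; lra.
    simpl. specialize (hf (S m)). specialize (IH ltac:(lia)). lra.
Qed.

Definition a (m j : nat) : R := INR m ^ j / INR (fact j).

Lemma a_pos m j : 0 <= a m j.
Proof. unfold a. apply Rdiv_le_0_compat. apply pow_le, pos_INR. apply lt_0_INR, lt_O_fact. Qed.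

Lemma a_step m k : (1 <= m)%nat -> a m k = a m (S k) * INR (S k) / INR m.
Proof.
  intros hm. unfold a. change (fact (S k)) with (S k * fact k)%nat.
  rewrite mult_INR. simpl pow.
  assert (0 < INR m) by (apply lt_0_INR; lia).
  assert (0 < INR (fact k)) by (apply lt_0_INR, lt_O_fact).
  assert (0 < INR (S k)) by (apply lt_0_INR; lia).
  field. lra.
Qed.

Lemma a_low m i : (1 <= m)%nat -> (i <= m)%nat ->
  a m m * (1 - INR i * (INR i - 1) / (2 * INR m)) <= a m (m - i).
Proof.
  intros hm. induction i as [|i IH]; intros hi.
  - rewrite Nat.sub_0_r. simpl. lra.
  - assert (hM : 0 < INR m) by (apply lt_0_INR; lia).
    specialize (IH ltac:(lia)).
    rewrite (a_step m (m - S i) hm).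
    replace (S (m - S i)) with (m - i)%nat by lia.
    rewrite minus_INR by lia. rewrite S_INR.
    set (c := 1 - INR i * (INR i - 1) / (2 * INR m)) in *.
    assert (hc : c <= 1).
    { unfold c. destruct i. simpl. lra.
      rewrite S_INR. pose proof (pos_INR i).
      assert (0 <= (INR i + 1) * (INR i + 1 - 1) / (2 * INR m)).
      apply Rdiv_le_0_compat; nra. lra. }
    assert (hi' : INR i + 1 <= INR m) by (rewrite <- S_INR; apply le_INR; lia).
    pose proof (a_pos m m). pose proof (a_pos m (m - i)).
    set (d := (INR m - INR i) / INR m).
    assert (hd : 0 <= d <= 1).
    { unfold d. pose proof (pos_INR i). split.
      apply Rdiv_le_0_compat; lra.
      apply Rmult_le_reg_r with (INR m); auto. unfold Rdiv. rewrite Rmult_assoc, Rinv_l; lra. }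
    replace (a m (m - i) * (INR m - INR i) / INR m) with (a m (m - i) * d) by (unfold d; field; lra).
    replace (1 - (INR i + 1) * (INR i + 1 - 1) / (2 * INR m)) with (c - (1 - d)) by (unfold c, d; field; lra).
    apply Rle_trans with (a m m * c * d).
    + assert (0 <= (1 - c) * (1 - d)) by nra. nra.
    + apply Rmult_le_compat_r; lra.
Qed.

Lemma a_up m i : (1 <= m)%nat -> (i <= m)%nat -> a m (m - i) <= a m m.
Proof.
  intros hm. induction i as [|i IH]; intros hi.
  - rewrite Nat.sub_0_r. lra.
  - assert (hM : 0 < INR m) by (apply lt_0_INR; lia).
    specialize (IH ltac:(lia)).
    rewrite (a_step m (m - S i) hm).
    replace (S (m - S i)) with (m - i)%nat by lia.
    rewrite minus_INR by lia.
    pose proof (a_pos m (m - i)). pose proof (pos_INR i).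
    apply Rle_trans with (a m (m - i)); auto.
    apply Rmult_le_reg_r with (INR m); auto. unfold Rdiv.
    rewrite Rmult_assoc, Rinv_l by lra. nra.
Qed.

Lemma closed_form (M : R) (K : nat) : M <> 0 ->
  sum_f_R0 (fun i => 1 - INR i * (INR i - 1) / M) K =
  INR K + 1 - (INR K + 1) * INR K * (INR K - 1) / (3 * M).
Proof.
  intros hM. induction K as [|K IH].
  - simpl sum_f_R0. simpl INR. unfold Rdiv; ring.
  - rewrite tech5, IH, S_INR. field. auto.
Qed.
Lemma term_low (A B c : R) : 0 <= A -> 0 <= B -> A * c <= B -> (2*c - 1) * A^2 <= B^2.
Proof.
  intros hA hB h. destruct (Rle_lt_dec 0 c).
  - assert ((A*c)^2 <= B^2) by (apply pow_incr; split; nra).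
    assert (0 <= (c-1)^2 * A^2) by (apply Rmult_le_pos; apply pow2_ge_0).
    nra.
  - assert (0 <= A^2) by apply pow2_ge_0. assert (0 <= B^2) by apply pow2_ge_0. nra.
Qed.

Theorem lemmaA2 (m : nat) (hm : (1 <= m)%nat) :
  exp (INR m) / (Rpower (INR m) (1/4) * exp 2) <= sqrt (Ssq m) /\
  sqrt (Ssq m) <= exp (INR m) / Rpower (INR m) (1/4).
Proof.
  assert (hM : 0 < INR m) by (apply lt_0_INR; lia).
  set (M := INR m) in *.
  set (s := sqrt M).
  assert (hs : 0 < s) by (apply sqrt_lt_R0; auto).
  set (q := Rpower M (1/4)).
  assert (hq0 : 0 < q) by (unfold q, Rpower; apply exp_pos).
  assert (hq : q * q = s).
  { unfold q, s. rewrite <- Rpower_plus, <- Rpower_sqrt by auto. f_equal. field. }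
  set (am := a m m).
  destruct (am_bounds m hm) as [Alo Aup]. fold M s in Alo, Aup.
  change (INR m ^ m / INR (fact m)) with am in Alo, Aup.
  assert (hS : Ssq m = sum_f_R0 (fun j => a m j ^ 2) m) by reflexivity.
  assert (hE1 : 2 < exp 1) by (pose proof (exp_ineq1 1 ltac:(lra)); lra).
  set (E1 := exp 1) in *.
  set (X := exp (M - 1)).
  assert (hX : 0 < X) by apply exp_pos.
  assert (eM : exp M = X * E1) by (unfold X, E1; rewrite <- exp_plus; f_equal; ring).
  assert (e2 : exp 2 = E1 * E1) by (unfold E1; rewrite <- exp_plus; f_equal; ring).
  fold X in Alo. rewrite eM in Aup |- *. rewrite e2.
  assert (ham : 0 <= am) by apply a_pos.
  split.
  -
    set (K := Nat.sqrt m).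
    destruct (Nat.sqrt_spec m ltac:(lia)) as [K1 K2]. fold K in K1, K2.
    assert (hKm : (K <= m)%nat) by apply Nat.sqrt_le_lin.
    assert (K1r : INR K * INR K <= M) by (unfold M; rewrite <- mult_INR; apply le_INR; auto).
    assert (K2r : M < (INR K + 1) * (INR K + 1)).
    { unfold M. rewrite <- S_INR, <- mult_INR. apply lt_INR; auto. }
    assert (hK0 : 0 <= INR K) by apply pos_INR.
    assert (hsK : s < INR K + 1).
    { unfold s. rewrite <- (sqrt_square (INR K + 1)) by lra. apply sqrt_lt_1_alt. lra. }
    assert (Slow : am ^ 2 * (2/3 * (INR K + 1)) <= Ssq m).
    { rewrite hS, <- (sum_rev m (fun j => a m j ^ 2)).
      apply Rle_trans with (sum_f_R0 (fun i => a m (m - i) ^ 2) K).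
      2: { apply sum_mono_n; auto. intros; apply pow2_ge_0. }
      apply Rle_trans with (sum_f_R0 (fun i => (1 - INR i * (INR i - 1) / M) * am ^ 2) K).
      2: { apply sum_Rle. intros i hi.
           pose proof (a_low m i hm ltac:(lia)) as h. fold am M in h.
           replace (1 - INR i * (INR i - 1) / M) with (2 * (1 - INR i * (INR i - 1) / (2 * M)) - 1)
             by (field; lra).
           apply term_low; auto. apply a_pos. }
      rewrite <- scal_sum, closed_form by lra.
      apply Rmult_le_compat_l. apply pow2_ge_0.
      assert (INR K * (INR K - 1) / M <= 1).
      { apply Rmult_le_reg_r with M; auto. unfold Rdiv. rewrite Rmult_assoc, Rinv_l; lra. }
      replace ((INR K + 1) * INR K * (INR K - 1) / (3 * M)) with ((INR K + 1) * (INR K * (INR K - 1) / M) / 3)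
        by (field; lra).
      nra. }
    assert (Am2 : X ^ 2 / s ^ 2 <= am ^ 2).
    { replace (X ^ 2 / s ^ 2) with ((X / s) ^ 2) by (field; lra).
      apply pow_incr. split; auto. left. apply Rdiv_lt_0_compat; auto. }
    assert (Slow2 : 2/3 * (X ^ 2 / s) <= Ssq m).
    { apply Rle_trans with (am ^ 2 * (2/3 * (INR K + 1))); auto.
      apply Rle_trans with (X ^ 2 / s ^ 2 * (2 / 3 * s)).
      right. field. lra.
      apply Rmult_le_compat; try lra.
      left. apply Rdiv_lt_0_compat; apply pow_lt; auto. }
    set (y := X * E1 / (q * (E1 * E1))).
    assert (hy : 0 <= y).
    { left. unfold y. apply Rdiv_lt_0_compat. nra. apply Rmult_lt_0_compat; nra. }
    assert (ey : y ^ 2 = X ^ 2 / s * / (E1 ^ 2)).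
    { unfold y. rewrite <- hq. field. lra. }
    rewrite <- (sqrt_pow2 y hy). apply sqrt_le_1_alt.
    apply Rle_trans with (2/3 * (X ^ 2 / s)); auto.
    rewrite ey, Rmult_comm. apply Rmult_le_compat_r.
    left. apply Rdiv_lt_0_compat; auto. apply pow_lt; auto.
    assert (4 <= E1 ^ 2) by nra.
    apply Rmult_le_reg_r with (E1 ^ 2). nra.
    rewrite Rinv_l by nra. nra.
  -
    assert (Sup : Ssq m <= am * (X * E1)).
    { rewrite hS.
      apply Rle_trans with (sum_f_R0 (fun j => a m j * am) m).
      { apply sum_Rle. intros j hj.
        pose proof (a_up m (m - j) hm ltac:(lia)) as h.
        replace (m - (m - j))%nat with j in h by lia.
        pose proof (a_pos m j). fold am in h. simpl. nra. }
      rewrite <- scal_sum. apply Rmult_le_compat_l; auto.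
      rewrite <- eM. apply Coquelicot.ElemFct.exp_ge_taylor. lra. }
    set (y := X * E1 / q).
    assert (hy : 0 <= y).
    { left. unfold y. apply Rdiv_lt_0_compat; nra. }
    rewrite <- (sqrt_pow2 y hy). apply sqrt_le_1_alt.
    replace (y ^ 2) with ((X * E1 / s) * (X * E1)) by (unfold y; rewrite <- hq; field; lra).
    apply Rle_trans with (am * (X * E1)); auto.
    apply Rmult_le_compat_r; auto. nra.
Qed.
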